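(* Let $K$ be a non-archimedean local field and let $G$ be a discrete subgroup of $\mathrm{PSL}_2(K)$ with no $2$-torsion. For each vertex $v$ and each edge $e$ of the Bruhat--Tits tree $T_K$, the stabilisers $G_v$ and $G_e$ each have a unique lift to $\mathrm{SL}_2(K)$; that is, for $H\in\{G_v,G_e\}$ there exists exactly one homomorphism $\phi\colon H\to\mathrm{SL}_2(K)$ with $\pi\circ\phi=\mathrm{id}_H$, where $\pi\colon\mathrm{SL}_2(K)\to\mathrm{PSL}_2(K)$ is the quotient map.
   Context: $T_K$ is the Bruhat--Tits tree on which $\mathrm{PSL}_2(K)$ acts; $G_v$, $G_e$ denote the stabilisers in $G$ of the vertex $v$ and the edge $e$. *)

(* Defs.v *)
From HB Require Import structures.
From mathcomp Require Import all_boot all_order all_algebra.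
From Stdlib Require Import ClassicalEpsilon.

Set Implicit Arguments.
Unset Strict Implicit.
Unset Printing Implicit Defensive.

Import Order.TTheory GRing.Theory Num.Theory.
Local Open Scope ring_scope.

Section BruhatTits.

Variable K : fieldType.

(** ** Non-archimedean local fields.
    [v : K -> int] is a normalised discrete valuation; its value at 0 is
    irrelevant (all axioms only concern nonzero arguments, and
    "x is close to y" is phrased as [x = y \/ n <= v (x - y)]). *)
Variable v : K -> int.

Definition vclose (n : int) (a b : K) : Prop := a = b \/ n <= v (a - b).

Definition inO (x : K) : Prop := x = 0 \/ 0 <= v x.

Definition is_discrete_valuation : Prop :=
  [/\ (forall x y, x != 0 -> y != 0 -> v (x * y) = v x + v y),
      (forall x y, x != 0 -> y != 0 -> x + y != 0 ->
                   Num.min (v x) (v y) <= v (x + y))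
    & (exists p : K, p != 0 /\ v p = 1)].

(** residue field O / m is finite: finitely many residue representatives *)
Definition finite_residue_field : Prop :=
  exists s : seq K, (forall a, a \in s -> inO a) /\
    forall x, inO x -> exists2 a, a \in s & vclose 1 x a.

Definition v_complete : Prop :=
  forall u : nat -> K,
    (forall n : int, exists N, forall m p, (N <= m)%N -> (N <= p)%N ->
        vclose n (u m) (u p)) ->
    exists l : K, forall n : int, exists N, forall m, (N <= m)%N ->
        vclose n (u m) l.

Definition is_nonarch_local_field : Prop :=
  [/\ is_discrete_valuation, finite_residue_field & v_complete].

(** ** SL_2 and PSL_2 = SL_2 / {+-1}.
    An element of PSL_2(K) is a coset {M, -M} of a determinant-one matrix,
    represented as a set of matrices. *)
Definition pclass (M : 'M[K]_2) : 'M[K]_2 -> Prop := fun N => N = M \/ N = - M.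

Definition is_psl2 (X : 'M[K]_2 -> Prop) : Prop :=
  exists M, \det M = 1 /\ forall N, X N <-> pclass M N.

Record PSL2 := MkPSL2 { pset : 'M[K]_2 -> Prop ; pset_ok : is_psl2 pset }.

Definition rep (x : PSL2) : 'M[K]_2 :=
  proj1_sig (constructive_indefinite_description _ (pset_ok x)).

Lemma rep_det (x : PSL2) : \det (rep x) = 1.
Proof.
by rewrite /rep; case: constructive_indefinite_description => M [].
Qed.

Lemma pclass_ok (M : 'M[K]_2) : \det M = 1 -> is_psl2 (pclass M).
Proof. by move=> HM; exists M; split. Qed.

Definition pi_SL2 (M : 'M[K]_2) (HM : \det M = 1) : PSL2 := MkPSL2 (pclass_ok HM).

Definition lifts_to (M : 'M[K]_2) (x : PSL2) : Prop :=
  \det M = 1 /\ forall N, pset x N <-> pclass M N.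

Lemma det_one_mx : \det (1%:M : 'M[K]_2) = 1.
Proof. exact: det1. Qed.

Definition punit : PSL2 := pi_SL2 det_one_mx.

Lemma det_mul_rep (x y : PSL2) : \det (rep x *m rep y) = 1.
Proof. by rewrite det_mulmx !rep_det mulr1. Qed.

Definition pmul (x y : PSL2) : PSL2 := pi_SL2 (det_mul_rep x y).

Lemma det_inv_rep (x : PSL2) : \det (invmx (rep x)) = 1.
Proof. by rewrite det_inv rep_det invr1. Qed.

Definition pinv (x : PSL2) : PSL2 := pi_SL2 (det_inv_rep x).

Definition is_subgroup (G : PSL2 -> Prop) : Prop :=
  [/\ G punit, (forall x y, G x -> G y -> G (pmul x y))
    & (forall x, G x -> G (pinv x))].

Definition no_2_torsion (G : PSL2 -> Prop) : Prop :=
  forall x, G x -> pmul x x = punit -> x = punit.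

(** topology of PSL_2(K): quotient of the valuation topology on SL_2(K);
    x and y are n-close if some representatives are entrywise n-close.
    G is discrete: every point of G is isolated in G. *)
Definition pclose (n : int) (x y : PSL2) : Prop :=
  exists A B, pset x A /\ pset y B /\ forall i j, vclose n (A i j) (B i j).

Definition is_discrete (G : PSL2 -> Prop) : Prop :=
  forall x, G x -> exists n : int, forall y, G y -> pclose n x y -> y = x.

(** Vertices: homothety classes of O-lattices in K^2; the lattice with basis
    the columns of an invertible g is [lattice g].  A vertex is given by such
    a g (every vertex arises this way). *)
Definition vset := 'cV[K]_2 -> Prop.

Definition lattice (g : 'M[K]_2) : vset :=
  fun w => exists c : 'cV[K]_2, (forall i, inO (c i 0)) /\ w = g *m c.

Definition img (A : 'M[K]_2) (L : vset) : vset :=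
  fun w => exists u, L u /\ w = A *m u.

Definition scale (a : K) (L : vset) : vset :=
  fun w => exists u, L u /\ w = a *: u.

Definition vsubset (L L' : vset) : Prop := forall w, L w -> L' w.

Definition homothetic (L L' : vset) : Prop :=
  exists a : K, a != 0 /\ forall w, scale a L w <-> L' w.

Definition acts_to (x : PSL2) (g h : 'M[K]_2) : Prop :=
  exists A, pset x A /\ homothetic (img A (lattice g)) (lattice h).

Definition adjacent (g h : 'M[K]_2) : Prop :=
  exists p a : K, p != 0 /\ v p = 1 /\ a != 0 /\
    vsubset (scale p (lattice g)) (scale a (lattice h)) /\
    ~ vsubset (scale a (lattice h)) (scale p (lattice g)) /\
    vsubset (scale a (lattice h)) (lattice g) /\
    ~ vsubset (lattice g) (scale a (lattice h)).

Definition vertex_stab (G : PSL2 -> Prop) (g : 'M[K]_2) : PSL2 -> Prop :=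
  fun x => G x /\ acts_to x g g.

Definition edge_stab (G : PSL2 -> Prop) (g h : 'M[K]_2) : PSL2 -> Prop :=
  fun x => G x /\ ((acts_to x g g /\ acts_to x h h) \/
                   (acts_to x g h /\ acts_to x h g)).

Definition is_lift (H : PSL2 -> Prop) (phi : PSL2 -> 'M[K]_2) : Prop :=
  (forall x, H x -> lifts_to (phi x) x) /\
  (forall x y, H x -> H y -> phi (pmul x y) = phi x *m phi y).

Definition unique_lift (H : PSL2 -> Prop) : Prop :=
  exists phi, is_lift H phi /\
    forall psi, is_lift H psi -> forall x, H x -> psi x = phi x.

End BruhatTits.

(* Main.v *)
Require Import Defs.
From HB Require Import structures.
From mathcomp Require Import all_boot all_order all_algebra all_fingroup all_solvable.
From Stdlib Require Import ClassicalEpsilon FunctionalExtensionality PropExtensionality ProofIrrelevance.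
From mathcomp Require Import zify ring.
Set Implicit Arguments. Unset Strict Implicit. Unset Printing Implicit Defensive.
Import GRing.Theory.
Set Warnings "-redundant-canonical-projection -projection-no-head-constant -notation-overridden -ambiguous-paths".

Section GroupPart.
Variable K : fieldType.
Variable S : 'M[K]_2 -> Prop.
Variable l : seq 'M[K]_2.
Local Open Scope ring_scope.
Hypothesis Sl : forall M, S M -> M \in l.
Hypothesis S1 : S 1%:M.
Hypothesis SM : forall A B, S A -> S B -> S (A *m B).
Hypothesis SN : forall A, S A -> S (- A).
Hypothesis SV : forall A, S A -> S (invmx A).
Hypothesis SU : forall A, S A -> A \in unitmx.
Hypothesis S2 : forall M, S M -> (M *m M = 1%:M \/ M *m M = - 1%:M) -> M = 1%:M \/ M = - 1%:M.
Hypothesis char2 : (2 : K) != 0.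

Definition sb (M : 'M[K]_2) : bool := if excluded_middle_informative (S M) then true else false.
Lemma sbP M : sb M <-> S M.
Proof. by rewrite /sb; case: excluded_middle_informative. Qed.

Definition l' := filter sb l.
Lemma inl' M : S M -> M \in l'.
Proof. by move=> h; rewrite mem_filter Sl // andbT; apply/sbP. Qed.
Lemma l'S M : M \in l' -> S M.
Proof. by rewrite mem_filter => /andP [/sbP]. Qed.

Definition T := seq_sub l'.
HB.instance Definition _ := Finite.copy T (seq_sub l').
HB.instance Definition _ := [isSub of T for @ssval _ l'].
Definition mulT (a b : T) : T := Sub (val a *m val b) (inl' (SM (l'S (valP a)) (l'S (valP b)))).
Definition oneT : T := Sub 1%:M (inl' S1).
Definition invT (a : T) : T := Sub (invmx (val a)) (inl' (SV (l'S (valP a)))).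
Lemma mulTA : associative mulT.
Proof. by move=> a b c; apply: val_inj; rewrite /= mulmxA. Qed.
Lemma mul1T : left_id oneT mulT.
Proof. by move=> a; apply: val_inj; rewrite /= mul1mx. Qed.
Lemma mulVT : left_inverse oneT invT mulT.
Proof. by move=> a; apply: val_inj; rewrite /= mulVmx //; apply: SU; apply: l'S; exact: (valP a). Qed.
HB.instance Definition _ := Finite_isGroup.Build T mulTA mul1T mulVT.

Lemma valM (a b : T) : val (a * b)%g = val a *m val b. Proof. by []. Qed.
Lemma val1 : val (1%g : T) = 1%:M. Proof. by []. Qed.


Lemma valX (a : T) k : val (a ^+ k)%g = (val a) ^+ k.
Proof.
elim: k => [|k IH]; first by rewrite expg0 val1 expr0.
by rewrite expgS valM IH exprS.
Qed.

Lemma S_T (a : T) : S (val a).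
Proof. exact: l'S (valP a). Qed.

Lemma neg1_ne1 : (- 1%:M : 'M[K]_2) != 1%:M.
Proof.
apply/eqP => /matrixP /(_ 0 0); rewrite !mxE /= => /eqP.
rewrite eq_sym -subr_eq0 opprK => /eqP h.
by move: char2; rewrite mulr2n h eqxx.
Qed.

Definition zT : T := Sub (- 1%:M) (inl' (SN S1)).

Lemma zT_ne1 : zT != 1%g.
Proof. apply/eqP => /(congr1 val) => /= h; by move: neg1_ne1; rewrite h eqxx. Qed.

Lemma zT2 : (zT * zT = 1)%g.
Proof. by apply: val_inj; rewrite valM /= mulmxN mulNmx mul1mx opprK. Qed.

Lemma zT_comm (a : T) : commute zT a.
Proof. by apply: val_inj; rewrite !valM /= mulNmx mulmxN mul1mx mulmx1. Qed.

Lemma ord_zT : #[zT]%g = 2.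
Proof.
have h : (#[zT]%g %| 2)%N by rewrite order_dvdn expgS expg1 zT2.
have : (#[zT]%g != 1)%N by rewrite order_eq1 zT_ne1.
by move=> ne; apply/(prime_nt_dvdP _ ne).
Qed.

Lemma valN (a : T) : val (zT * a)%g = - val a.
Proof. by rewrite valM /= mulNmx mul1mx. Qed.

Lemma sq_pm1 (a : T) : (a * a = 1)%g \/ (a * a = zT)%g -> a = 1%g \/ a = zT.
Proof.
move=> h.
have : val a = 1%:M \/ val a = - 1%:M.
  apply: S2; first exact: S_T.
  by case: h => h; [left | right]; rewrite -valM h.
by case=> h'; [left | right]; apply: val_inj; rewrite h'.
Qed.


Definition section (N : 'M[K]_2 -> Prop) :=
  [/\ (forall M, N M -> S M), (forall A B, N A -> N B -> N (A *m B)),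
      (forall M, S M -> N M \/ N (- M)) & (forall M, N M -> ~ N (- M))].

Lemma section_odd N (a : T) : section N -> N (val a) -> odd #[a]%g.
Proof.
case=> NS NM NSN NN Na.
have Npow : forall k, N (val (a ^+ k.+1)%g).
  elim=> [|k IH]; first by rewrite expg1.
  by rewrite expgS valM; apply: NM.
case: (boolP (odd #[a]%g)) => // ev.
have o0 := order_gt0 a.
have [q oq] : exists q, #[a]%g = (q + q)%N.
  exists (#[a]%g./2); rewrite addnn -[in LHS](odd_double_half #[a]%g).
  by rewrite (negbTE ev).
have q0 : (0 < q)%N by move: o0; rewrite oq; case: q {oq}.
have bb : ((a ^+ q) * (a ^+ q) = 1)%g by rewrite -expgD -oq expg_order.
case: (sq_pm1 (or_introl bb)) => hb.
  have : (#[a]%g %| q)%N by rewrite order_dvdn hb.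
  rewrite oq => /dvdn_leq => /(_ q0); move: q0; clear; lia.
have N1 : N 1%:M.
  have := Npow (#[a]%g.-1); rewrite prednK // expg_order //.
have Nm1 : N (- 1%:M).
  have := Npow q.-1; rewrite prednK // hb //.
by case: (NN _ N1 Nm1).
Qed.

Lemma section_uniq N1 N2 : section N1 -> section N2 -> forall M, N1 M -> N2 M.
Proof.
move=> s1 s2 M h1.
have SMM : S M by case: s1 => h _ _ _; exact: h.
pose a : T := Sub M (inl' SMM).
case: (s2) => _ _ h _; case: (h M SMM) => // h2.
have o1 : odd #[a]%g by apply: (section_odd s1).
have o2 : odd #[zT * a]%g by apply: (section_odd s2); rewrite valN.
pose k := (#[a]%g * #[zT * a]%g)%N.
have e1 : (a ^+ k = 1)%g by apply/eqP; rewrite -order_dvdn dvdn_mulr.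
have e2 : ((zT * a) ^+ k = 1)%g by apply/eqP; rewrite -order_dvdn dvdn_mull.
have e3 : (zT ^+ k = zT)%g.
  by rewrite -expg_mod_order ord_zT modn2 oddM o1 o2 expg1.
move: e2; rewrite expgMn; last exact: zT_comm.
rewrite e1 mulg1 e3 => e; by move: zT_ne1; rewrite e eqxx.
Qed.


Lemma exists_section : exists N, section N.
Proof.
pose Z := <[zT]>%G.
have Z2 : Z :=: [set 1%g; zT] by rewrite /= cycle2g // ord_zT.
have nZ : (Z <| [set: T])%g.
  apply: sub_center_normal; rewrite cycle_subG; apply/centerP; split=> //.
  by move=> y _; exact: zT_comm.
have hall : Hall [set: T] Z.
  rewrite /Hall subsetT /= -card_quotient; last exact: normal_norm nZ.
  have -> : #|<[zT]>%g| = 2 by exact: ord_zT.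
  rewrite coprime2n.
  case: (boolP (odd _)) => // ev; exfalso.
  have : (2 %| #|[set: T] / <[zT]>|)%g%N by rewrite dvdn2.
  case/Cauchy => // X _ oX.
  have [x nx defX] := cosetP X.
  have x2 : (x ^+ 2 \in Z)%g.
    apply: coset_idr; first by rewrite groupX.
    by rewrite morphX //= -defX -oX expg_order.
  have xZ : (x \notin Z)%g.
    apply/negP => xZ; have : X = 1%g by rewrite defX coset_id.
    by move=> X1; move: oX; rewrite X1 order1.
  move: x2 xZ; rewrite Z2 !inE expgS expg1.
  case/orP => /eqP h; case: (sq_pm1 (a := x)) => [|->|->]; rewrite ?eqxx ?orbT //;
    by [left | right].
have := SchurZassenhaus_split hall nZ.
case/splitsP => N /complP [tiZN eZN].
exists (fun M => exists2 a : T, (a \in N)%g & val a = M); split.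
- by move=> M [a _ <-]; exact: S_T.
- move=> A B [a aN <-] [b bN <-]; exists (a * b)%g => //; exact: groupM.
- move=> M SMM; pose a : T := Sub M (inl' SMM).
  have : (a \in Z * N)%g by rewrite eZN inE.
  case/mulsgP => y n; rewrite Z2 !inE => /orP [] /eqP -> nN ean.
    by left; exists n => //; rewrite -[n]mul1g -ean.
  right; exists n => //.
  have -> : n = (zT * a)%g by rewrite ean mulgA zT2 mul1g.
  by rewrite valN.
- move=> M [a aN <-] [b bN hb].
  have bz : b = (zT * a)%g by apply: val_inj; rewrite valN.
  have zN : (zT \in N)%g.
    have -> : zT = (b * a^-1)%g by rewrite bz -mulgA mulgV mulg1.
    by rewrite groupM ?groupV.
  have : (zT \in Z :&: N)%g by rewrite inE zN andbT Z2 !inE eqxx orbT.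
  by rewrite tiZN inE => /eqP h; move: zT_ne1; rewrite h eqxx.
Qed.

Lemma unique_section : exists N, section N /\ forall N', section N' -> forall M, N' M -> N M.
Proof.
have [N sN] := exists_section.
by exists N; split=> // N' sN'; apply: section_uniq.
Qed.

End GroupPart.

Import Order.TTheory Num.Theory.
Local Open Scope ring_scope.

Section PSL.
Variable K : fieldType.
Implicit Types (x y : PSL2 K) (A B M N : 'M[K]_2).

Lemma psl_ext x y : (forall N, pset x N <-> pset y N) -> x = y.
Proof.
case: x => X hX; case: y => Y hY /= h.
have e : X = Y by apply: functional_extensionality => N; apply: propositional_extensionality.
subst Y; f_equal; apply: proof_irrelevance.
Qed.

Lemma negmx A : - A = (-1) *: A. Proof. by rewrite scaleN1r. Qed.

Lemma detN2 A : \det (- A) = \det A.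
Proof. by rewrite negmx detZ expr2 mulrNN !mul1r. Qed.

Lemma invmxN A : A \in unitmx -> invmx (- A) = - invmx A.
Proof.
move=> uA; rewrite negmx invmxZ ?invrN1 ?scaleN1r //.
by rewrite unitmxE detN2 -unitmxE.
Qed.

Lemma pclass_eq A B : A = B \/ A = - B -> forall N, pclass A N <-> pclass B N.
Proof.
move=> h N; rewrite /pclass; case: h => ->; first by [].
by rewrite opprK; split; case=> ->; by [right | left].
Qed.

Lemma rep_lifts x : lifts_to (rep x) x.
Proof. by rewrite /rep; case: constructive_indefinite_description => M [d h]; split. Qed.

Lemma lifts_pset A x : lifts_to A x -> pset x A.
Proof. by case=> _ h; apply/h; left. Qed.

Lemma pset_rep A x : pset x A -> A = rep x \/ A = - rep x.
Proof. by case: (rep_lifts x) => _ h /h. Qed.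

Lemma lifts_pm A B x : lifts_to A x -> B = A \/ B = - A -> lifts_to B x.
Proof.
move=> [dA hA] e; split.
  by case: e => ->; rewrite ?detN2.
by move=> N; rewrite hA; apply: pclass_eq; case: e => ->; [left | right; rewrite opprK].
Qed.

Lemma pset_lifts A x : pset x A -> lifts_to A x.
Proof. by move/pset_rep => e; apply: lifts_pm (rep_lifts x) e. Qed.

Lemma lifts_uniq A B x : lifts_to A x -> lifts_to B x -> B = A \/ B = - A.
Proof. by move=> [_ hA] /lifts_pset /hA. Qed.

Lemma lifts_inj A x y : lifts_to A x -> lifts_to A y -> x = y.
Proof. by move=> [_ hx] [_ hy]; apply: psl_ext => N; rewrite hx hy. Qed.

Lemma lifts_neg A x : lifts_to A x -> lifts_to (- A) x.
Proof. by move=> h; apply: lifts_pm h _; right. Qed.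

Lemma lifts_pi M (HM : \det M = 1) : lifts_to M (pi_SL2 HM).
Proof. by split. Qed.

Lemma lifts_mul A B x y : lifts_to A x -> lifts_to B y -> lifts_to (A *m B) (pmul x y).
Proof.
move=> hA hB; apply: lifts_pm (lifts_pi (det_mul_rep x y)) _.
case: (lifts_uniq (rep_lifts x) hA) => ->; case: (lifts_uniq (rep_lifts y) hB) => ->;
  rewrite ?mulNmx ?mulmxN ?opprK; by [left | right].
Qed.

Lemma lifts_unit A x : lifts_to A x -> A \in unitmx.
Proof. by case=> d _; rewrite unitmxE d unitr1. Qed.

Lemma lifts_inv A x : lifts_to A x -> lifts_to (invmx A) (pinv x).
Proof.
move=> hA; apply: lifts_pm (lifts_pi (det_inv_rep x)) _.
case: (lifts_uniq (rep_lifts x) hA) => ->; first by left.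
by right; rewrite invmxN ?opprK //; apply: lifts_unit (rep_lifts x).
Qed.

Lemma lifts_one : lifts_to 1%:M (punit K).
Proof. exact: lifts_pi. Qed.

End PSL.

Section Val.
Variable K : fieldType.
Variable v : K -> int.
Hypothesis Hmul : forall x y, x != 0 -> y != 0 -> v (x * y) = v x + v y.
Hypothesis Hadd : forall x y, x != 0 -> y != 0 -> x + y != 0 -> Num.min (v x) (v y) <= v (x + y).

Definition ge (n : int) (x : K) : Prop := x = 0 \/ n <= v x.

Lemma v1 : v 1 = 0.
Proof. have h := Hmul (oner_neq0 K) (oner_neq0 K); rewrite mulr1 in h; apply: (@addIr _ (v 1)); rewrite add0r; exact: esym h. Qed.

Lemma vN1 : v (-1) = 0.
Proof.
have n1 : (-1 : K) != 0 by rewrite oppr_eq0 oner_neq0.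
have := Hmul n1 n1; rewrite mulrNN mulr1 v1; lia.
Qed.

Lemma vN x : v (- x) = v x.
Proof.
case: (eqVneq x 0) => [->|x0]; first by rewrite oppr0.
have n1 : (-1 : K) != 0 by rewrite oppr_eq0 oner_neq0.
by rewrite -mulN1r Hmul // vN1 add0r.
Qed.

Lemma vV x : x != 0 -> v (x^-1) = - v x.
Proof.
move=> x0; have := Hmul x0 (invr_neq0 x0); rewrite mulfV // v1; lia.
Qed.

Lemma ge0 n : ge n 0. Proof. by left. Qed.

Lemma ge_le m n x : m <= n -> ge n x -> ge m x.
Proof. by move=> mn [->|h]; [left | right; apply: le_trans h]. Qed.

Lemma geN n x : ge n x -> ge n (- x).
Proof. by case=> [->|h]; [left; rewrite oppr0 | right; rewrite vN]. Qed.

Lemma geD n x y : ge n x -> ge n y -> ge n (x + y).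
Proof.
case=> [->|hx]; first by rewrite add0r.
case=> [->|hy]; first by rewrite addr0; right.
case: (eqVneq x 0) => [->|x0]; first by rewrite add0r; right.
case: (eqVneq y 0) => [->|y0]; first by rewrite addr0; right.
case: (eqVneq (x + y) 0) => [->|s0]; first by left.
right; apply: le_trans (Hadd x0 y0 s0); rewrite le_min hx hy //.
Qed.

Lemma geB n x y : ge n x -> ge n y -> ge n (x - y).
Proof. by move=> hx hy; apply: geD => //; apply: geN. Qed.

Lemma geM a b x y : ge a x -> ge b y -> ge (a + b) (x * y).
Proof.
case=> [->|hx]; first by rewrite mul0r; left.
case=> [->|hy]; first by rewrite mulr0; left.
case: (eqVneq x 0) => [->|x0]; first by rewrite mul0r; left.
case: (eqVneq y 0) => [->|y0]; first by rewrite mulr0; left.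
by right; rewrite Hmul // lerD.
Qed.

Lemma ge_v x : ge (v x) x.
Proof. by right. Qed.

Lemma ge_sign k : ge 0 ((-1) ^+ k).
Proof.
elim: k => [|k IH]; first by right; rewrite expr0 v1.
rewrite exprS; apply: (@ge_le _ (0 + 0)); first by rewrite addr0.
by apply: geM => //; right; rewrite vN1.
Qed.

Lemma ge_sum n (I : finType) (F : I -> K) : (forall i, ge n (F i)) -> ge n (\sum_i F i).
Proof.
move=> h; apply: (big_ind (ge n)) => //; first exact: ge0.
by move=> x y; apply: geD.
Qed.

Lemma ge_list (s : seq K) : exists n, forall x, x \in s -> ge n x.
Proof.
elim: s => [|a s [n IH]]; first by exists 0.
exists (if n <= v a then n else v a) => x; rewrite inE => /orP [/eqP ->|xs].
  by right; case: ifP => //; lia.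
by apply: ge_le (IH _ xs); case: ifP => //; lia.
Qed.

Definition mge n p q (A : 'M[K]_(p, q)) := forall i j, ge n (A i j).

Lemma mge_exists p q (A : 'M[K]_(p, q)) : exists n, mge n A.
Proof.
have [n h] := ge_list [seq A ij.1 ij.2 | ij <- enum {: 'I_p * 'I_q}].
exists n => i j; apply: h; apply: (map_f (fun ij : 'I_p * 'I_q => A ij.1 ij.2) (x := (i, j))).
by rewrite mem_enum.
Qed.

Lemma mge_le m n p q (A : 'M[K]_(p, q)) : m <= n -> mge n A -> mge m A.
Proof. by move=> mn h i j; apply: ge_le (h i j). Qed.

Lemma mgeD n p q (A B : 'M[K]_(p, q)) : mge n A -> mge n B -> mge n (A + B).
Proof. by move=> hA hB i j; rewrite mxE; apply: geD. Qed.

Lemma mgeN n p q (A : 'M[K]_(p, q)) : mge n A -> mge n (- A).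
Proof. by move=> hA i j; rewrite mxE; apply: geN. Qed.

Lemma mgeB n p q (A B : 'M[K]_(p, q)) : mge n A -> mge n B -> mge n (A - B).
Proof. by move=> hA hB; apply: mgeD => //; apply: mgeN. Qed.

Lemma mgeM a b p q r (A : 'M[K]_(p, q)) (B : 'M[K]_(q, r)) :
  mge a A -> mge b B -> mge (a + b) (A *m B).
Proof. by move=> hA hB i j; rewrite mxE; apply: ge_sum => k; apply: geM. Qed.

Lemma mgeZ a b p q (s : K) (A : 'M[K]_(p, q)) : ge a s -> mge b A -> mge (a + b) (s *: A).
Proof. by move=> hs hA i j; rewrite mxE; apply: geM. Qed.

Lemma mge1 n : mge 0 (1%:M : 'M[K]_n).
Proof.
move=> i j; rewrite mxE; case: (i == j); last by left.
by right; rewrite v1.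
Qed.

Lemma mge_inv n (A : 'M[K]_2) : \det A = 1 -> mge n A -> mge n (invmx A).
Proof.
move=> d h i j; rewrite /invmx unitmxE d unitr1 invr1 scale1r mxE /cofactor det_mx11 !mxE.
rewrite -[n]add0r; apply: geM; [exact: ge_sign | exact: h].
Qed.


Lemma vclose_ge n a b : vclose v n a b -> ge n (a - b).
Proof. by case=> [->|h]; [left; rewrite subrr | right]. Qed.

Lemma ge_vclose n a b : ge n (a - b) -> vclose v n a b.
Proof. by case=> [/eqP|h]; [rewrite subr_eq0 => /eqP; left | right]. Qed.

Variable pi : K.
Hypothesis pi0 : pi != 0.
Hypothesis vpi : v pi = 1.

Lemma vX k : v (pi ^+ k) = k%:Z.
Proof.
elim: k => [|k IH]; first by rewrite expr0 v1.
rewrite exprS Hmul ?expf_neq0 // IH vpi; lia.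
Qed.

Lemma vt (c : int) : exists t, t != 0 /\ v t = c.
Proof.
case: c => n; first by exists (pi ^+ n); rewrite expf_neq0 // vX.
exists ((pi ^+ n.+1)^-1); rewrite invr_neq0 ?expf_neq0 // vV ?expf_neq0 // vX.
split=> //; rewrite NegzE //.
Qed.

Variable s0 : seq K.
Hypothesis s0P : forall x, inO v x -> exists2 a, a \in s0 & vclose v 1 x a.

Lemma approx0 (k : nat) : exists L : seq K, forall x, ge 0 x -> exists2 a, a \in L & ge k%:Z (x - a).
Proof.
elim: k => [|k [L IH]].
  by exists [:: 0] => x hx; exists 0; rewrite ?inE // subr0.
exists [seq a + pi ^+ k * b | a <- L, b <- s0] => x hx.
have [a aL ha] := IH x hx.
have pk0 : pi ^+ k != 0 by rewrite expf_neq0.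
pose y := (x - a) / pi ^+ k.
have hy : ge 0 y.
  apply: (@ge_le _ (k%:Z + - k%:Z)); first by lia.
  by apply: geM => //; right; rewrite vV // vX.
have [b bs hb] := s0P hy.
exists (a + pi ^+ k * b); first exact: allpairs_f.
have -> : x - (a + pi ^+ k * b) = pi ^+ k * (y - b).
  by rewrite /y; field.
apply: (@ge_le _ (k%:Z + 1)); first by lia.
apply: geM; first by right; rewrite vX.
exact: vclose_ge.
Qed.

Lemma approx (c k : int) : exists L : seq K, forall x, ge c x -> exists2 a, a \in L & ge k (x - a).
Proof.
have [t [t0 vt']] := vt (- c).
have [L0 h0] := approx0 `|k - c|%N.
exists [seq a / t | a <- L0] => x hx.
have hxt : ge 0 (x * t).
  apply: (@ge_le _ (c + - c)); first by lia.
  by apply: geM => //; right; rewrite vt'.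
have [a aL ha] := h0 _ hxt.
exists (a / t); first exact: map_f.
have -> : x - a / t = (x * t - a) * t^-1 by field.
apply: (@ge_le _ (`|k - c|%N%:Z + c)); first by lia.
by apply: geM => //; right; rewrite vV // vt'; lia.
Qed.

Lemma mapprox (c k : int) : exists LM : seq 'M[K]_2,
  forall A, mge c A -> exists2 R, R \in LM & mge k (A - R).
Proof.
have [L hL] := approx c k.
exists [seq (\matrix_(i < 2, j < 2) nth 0 L (F (i, j)) : 'M[K]_2) | F : {ffun 'I_2 * 'I_2 -> 'I_(size L)} <- enum {: {ffun 'I_2 * 'I_2 -> 'I_(size L)}}].
move=> A hA.
have : forall ij : 'I_2 * 'I_2, exists idx : 'I_(size L), ge k (A ij.1 ij.2 - nth 0 L idx).
  move=> [i j]; have [a aL ha] := hL _ (hA i j).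
  by exists (Ordinal (etrans (index_mem a L) aL)); rewrite /= nth_index.
case/fin_all_exists => f hf.
exists (\matrix_(i < 2, j < 2) nth 0 L (finfun f (i, j))).
  by apply: (map_f (fun F : {ffun 'I_2 * 'I_2 -> 'I_(size L)} => (\matrix_(i < 2, j < 2) nth 0 L (F (i, j)) : 'M[K]_2))); rewrite mem_enum.
by move=> i j; rewrite !mxE ffunE; apply: (hf (i, j)).
Qed.

Implicit Types (x y : PSL2 K) (A B g h k : 'M[K]_2).

Lemma acts_one g : acts_to v (punit K) g g.
Proof.
exists 1%:M; split; first exact: lifts_pset (lifts_one K).
exists 1; split; first exact: oner_neq0.
move=> w; split.
  by case=> u [[u' [Lu' ->]] ->]; rewrite scale1r mul1mx.
by move=> Lw; exists w; split; [exists w; split; rewrite ?mul1mx | rewrite scale1r].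
Qed.

Lemma acts_mul x y g h k : acts_to v x h k -> acts_to v y g h -> acts_to v (pmul x y) g k.
Proof.
move=> [A [pA [a [a0 ha]]]] [B [pB [b [b0 hb]]]].
exists (A *m B); split; first exact: lifts_pset (lifts_mul (pset_lifts pA) (pset_lifts pB)).
exists (a * b); split; first by rewrite mulf_neq0.
move=> w; split.
  case=> u [[u' [Lu' ->]] ->]; apply/ha.
  exists (A *m (b *: (B *m u'))); split.
    exists (b *: (B *m u')); split => //; apply/hb.
    by exists (B *m u'); split => //; exists u'.
  by rewrite -!scalemxAr scalerA mulmxA.
move/ha => [u [[u1 [/hb [u2 [[u3 [Lu3 ->]] ->]] ->]] ->]].
exists (A *m B *m u3); split; first by exists u3.
by rewrite -!scalemxAr scalerA mulmxA.
Qed.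

Lemma acts_inv x g h : acts_to v x g h -> acts_to v (pinv x) h g.
Proof.
move=> [A [pA [a [a0 ha]]]].
have uA := lifts_unit (pset_lifts pA).
exists (invmx A); split; first exact: lifts_pset (lifts_inv (pset_lifts pA)).
exists a^-1; split; first by rewrite invr_neq0.
move=> w; split.
  case=> u [[u1 [/ha [u2 [[u3 [Lu3 ->]] ->]] ->]] ->].
  by rewrite scalemxAr scalerA mulVf // scale1r mulmxA mulVmx // mul1mx.
move=> Lw; exists (invmx A *m (a *: (A *m w))); split.
  by exists (a *: (A *m w)); split => //; apply/ha; exists (A *m w); split => //; exists w.
by rewrite scalemxAr scalerA mulVf // scale1r mulmxA mulVmx // mul1mx.
Qed.


Lemma colx (M : 'M[K]_2) i j : (M *m (delta_mx j (0 : 'I_1) : 'cV[K]_2)) i 0 = M i j.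
Proof. by rewrite -colE mxE. Qed.

Lemma lat_e g j : lattice v g (g *m (delta_mx j (0 : 'I_1) : 'cV[K]_2)).
Proof.
exists ((delta_mx j (0 : 'I_1) : 'cV[K]_2)); split => // i; rewrite mxE.
by case: (_ && _); [right; rewrite v1 | left].
Qed.

Lemma mx_of_cols (M N : 'M[K]_2) (d : 'I_2 -> 'cV[K]_2) :
  (forall j, M *m (delta_mx j (0 : 'I_1) : 'cV[K]_2) = N *m d j) ->
  M = N *m \matrix_(i < 2, j < 2) d j i 0.
Proof.
move=> h; apply/matrixP => i j; rewrite -colx h !mxE.
by apply: eq_bigr => k _; rewrite mxE.
Qed.

Lemma acts_bd g h : g \in unitmx -> h \in unitmx ->
  exists c, forall x, acts_to v x g h -> exists A, lifts_to A x /\ mge c A.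
Proof.
move=> ug uh.
have [lbh Hh] := mge_exists h.
have [lbg Hg] := mge_exists g.
have [lbgi Hgi] := mge_exists (invmx g).
have [lbhi Hhi] := mge_exists (invmx h).
pose c1 := lbh + lbgi; pose c2 := lbg + lbhi.
exists (if c1 <= c2 then c1 else c2) => x [A [pA [a [a0 ha]]]].
have lA := pset_lifts pA.
exists A; split => //.
have : forall j : 'I_2, exists d : 'cV[K]_2, (forall i, inO v (d i 0)) /\
          (a *: A *m g) *m (delta_mx j (0 : 'I_1) : 'cV[K]_2) = h *m d.
  move=> j; have : lattice v h (a *: (A *m (g *m (delta_mx j (0 : 'I_1) : 'cV[K]_2)))).
    by apply/ha; exists (A *m (g *m (delta_mx j (0 : 'I_1) : 'cV[K]_2))); split => //;
      exists (g *m (delta_mx j (0 : 'I_1) : 'cV[K]_2)); split => //; exact: lat_e.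
  by case=> d [hd e]; exists d; split => //; rewrite -e -mulmxA scalemxAl.
case/fin_all_exists => d hd.
have eD := mx_of_cols (fun j => proj2 (hd j)).
set D := \matrix_(i < 2, j < 2) _ in eD.
have mD : mge 0 D by move=> i j; rewrite mxE; exact: (proj1 (hd j)).
have eA : A = a^-1 *: (h *m D *m invmx g).
  by rewrite -eD mulmxK // scalerA mulVf // scale1r.
have b1 : mge (- v a + (lbh + 0 + lbgi)) A.
  rewrite eA; apply: mgeZ; first by right; rewrite vV.
  by apply: mgeM => //; apply: mgeM.
have : forall j : 'I_2, exists d : 'cV[K]_2, (forall i, inO v (d i 0)) /\
          h *m (delta_mx j (0 : 'I_1) : 'cV[K]_2) = (a *: A *m g) *m d.
  move=> j; have : scale a (img A (lattice v g)) (h *m (delta_mx j (0 : 'I_1) : 'cV[K]_2)).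
    by apply/ha; exact: lat_e.
  case=> u [[w [[cc [hc ->]] ->]] e]; exists cc; split => //.
  by rewrite e !mulmxA !scalemxAl.
case/fin_all_exists => cc hcc.
have eC := mx_of_cols (fun j => proj2 (hcc j)).
set C := \matrix_(i < 2, j < 2) _ in eC.
have mC : mge 0 C by move=> i j; rewrite mxE; exact: (proj1 (hcc j)).
have eI : invmx A = a *: (g *m C *m invmx h).
  have AB : A *m (a *: (g *m C *m invmx h)) = 1%:M.
    by rewrite -scalemxAr scalemxAl !mulmxA -eC mulmxV.
  by rewrite -[invmx A]mulmx1 -AB mulmxA mulVmx ?mul1mx //; exact: lifts_unit lA.
have b2 : mge (v a + (lbg + 0 + lbhi)) A.
  have dI : \det (invmx A) = 1 by rewrite det_inv (proj1 lA) invr1.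
  rewrite -(invmxK A); apply: mge_inv => //.
  rewrite eI; apply: mgeZ; first by right.
  by apply: mgeM => //; apply: mgeM.
move=> i j; case: (b1 i j) => [->|h1]; first by left.
case: (b2 i j) => [->|h2]; first by left.
right; rewrite /c1 /c2; case: ifPn => hc; lia.
Qed.


Lemma inP_list (T : eqType) (a : T) s : a \in s -> List.In a s.
Proof.
elim: s => [|b s IH] //; rewrite inE => /orP [/eqP ->|/IH]; by [left | right].
Qed.

Variable G : PSL2 K -> Prop.
Hypothesis HG : is_subgroup G.
Hypothesis Hdisc : is_discrete v G.

Lemma close_eq n0 c x x' A A' :
  (forall y, G y -> pclose v n0 (punit K) y -> y = punit K) ->
  G x -> G x' -> lifts_to A x -> lifts_to A' x' -> mge c A' -> mge (n0 - c) (A - A') -> x = x'.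
Proof.
move=> hn0 Gx Gx' lA lA' mA' mAA.
case: HG => G1 GM GV.
pose D := invmx A' *m A.
have lD : lifts_to D (pmul (pinv x') x) := lifts_mul (lifts_inv lA') lA.
have uA' := lifts_unit lA'.
have eD : D - 1%:M = invmx A' *m (A - A') by rewrite mulmxBr mulVmx.
have mD : mge (c + (n0 - c)) (D - 1%:M).
  by rewrite eD; apply: mgeM => //; apply: mge_inv => //; case: lA'.
have e1 : pmul (pinv x') x = punit K.
  apply: hn0; first by apply: GM => //; apply: GV.
  exists 1%:M, D; split; first exact: lifts_pset (lifts_one K).
  split; first exact: lifts_pset lD.
  move=> i j; apply: ge_vclose.
  have := mD i j; rewrite !mxE => /geN h.
  by rewrite opprB in h; apply: ge_le h; lia.
rewrite e1 in lD.
have eA : A = A' *m D by rewrite /D mulmxA mulmxV // mul1mx.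
have lAx' : lifts_to A x'.
  apply: lifts_pm lA' _; rewrite eA.
  by case: (lifts_uniq (lifts_one K) lD) => ->; rewrite ?mulmx1 ?mulmxN ?mulmx1; [left | right].
exact: lifts_inj lA lAx'.
Qed.

Lemma fin_bd c : exists lx : seq (PSL2 K), forall x, G x ->
  (exists A, lifts_to A x /\ mge c A) -> List.In x lx.
Proof.
have G1 : G (punit K) by case: HG.
have [n0 hn0] := Hdisc G1.
have [LM hLM] := mapprox c (n0 - c).
pose P R x := G x /\ exists A, [/\ lifts_to A x, mge c A & mge (n0 - c) (A - R)].
pose pick R := epsilon (inhabits (punit K)) (P R).
exists (map pick LM) => x Gx [A [lA mA]].
have [R RL mR] := hLM A mA.
have : P R (pick R) by apply: epsilon_spec; exists x; split => //; exists A.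
case=> Gp [A' [lA' mA' mR']].
have -> : x = pick R.
  apply: (close_eq hn0 Gx Gp lA lA' mA').
  have -> : A - A' = (A - R) - (A' - R) by rewrite opprB addrA subrK.
  exact: mgeB.
by apply: List.in_map; apply: inP_list.
Qed.

Lemma two_eq0 (M : 'M[K]_2) : (2 : K) != 0 -> M = - M -> M = 0.
Proof.
move=> h2 e; have : (2 : K) *: M = 0 by rewrite scaler_nat mulr2n {1}e addNr.
by move/eqP; rewrite scaler_eq0 (negbTE h2) /= => /eqP.
Qed.

Lemma lifts_ne0 M x : lifts_to M x -> M != 0.
Proof. by case=> d _; apply/eqP => M0; move: d; rewrite M0 det0 => /eqP; rewrite eq_sym oner_eq0. Qed.

Lemma in_flat_rep (lx : seq (PSL2 K)) x M : List.In x lx -> lifts_to M x ->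
  M \in flatten [seq [:: rep z; - rep z] | z <- lx].
Proof.
move=> hx lM; elim: lx hx => [|y s IH] //= [->|/IH h]; rewrite !inE; last by rewrite h !orbT.
by case: (lifts_uniq (rep_lifts x) lM) => ->; rewrite eqxx ?orbT.
Qed.

Lemma unique_lift_H (H : PSL2 K -> Prop) :
  H (punit K) -> (forall x y, H x -> H y -> H (pmul x y)) -> (forall x, H x -> H (pinv x)) ->
  (forall x, H x -> G x) -> (exists c, forall x, H x -> exists A, lifts_to A x /\ mge c A) ->
  no_2_torsion G -> unique_lift H.
Proof.
move=> H1 HM HV HGs [c Hc] H2.
case: (eqVneq (2 : K) 0) => [c2|c2].
  have negid (M : 'M[K]_2) : - M = M.
    have : M + M = 0 by rewrite -mulr2n -scaler_nat c2 scale0r.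
    by move/eqP; rewrite addr_eq0 => /eqP e; rewrite {1}e opprK.
  exists (@rep K); split.
    split; first by move=> x _; exact: rep_lifts.
    move=> x y _ _.
    by case: (lifts_uniq (lifts_mul (rep_lifts x) (rep_lifts y)) (rep_lifts (pmul x y))) => ->; rewrite ?negid.
  move=> psi [hpsi _] x Hx.
  by case: (lifts_uniq (rep_lifts x) (hpsi x Hx)) => ->; rewrite ?negid.
pose S M := exists x, H x /\ lifts_to M x.
have [lx hlx] := fin_bd c.
pose l := flatten [seq [:: rep x; - rep x] | x <- lx].
have Sl : forall M, S M -> M \in l.
  move=> M [x [Hx lM]].
  have : List.In x lx by apply: hlx; [exact: HGs | exact: Hc].
  by move=> h; apply: in_flat_rep h lM.
have S1 : S 1%:M by exists (punit K); split => //; exact: lifts_one.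
have SM : forall A B, S A -> S B -> S (A *m B).
  by move=> A B [x [Hx lA]] [y [Hy lB]]; exists (pmul x y); split; [exact: HM | exact: lifts_mul].
have SN : forall A, S A -> S (- A).
  by move=> A [x [Hx lA]]; exists x; split => //; exact: lifts_neg.
have SV : forall A, S A -> S (invmx A).
  by move=> A [x [Hx lA]]; exists (pinv x); split; [exact: HV | exact: lifts_inv].
have SU : forall A, S A -> A \in unitmx by move=> A [x [_ lA]]; exact: lifts_unit lA.
have S2 : forall M, S M -> (M *m M = 1%:M \/ M *m M = - 1%:M) -> M = 1%:M \/ M = - 1%:M.
  move=> M [x [Hx lM]] e.
  have lMM := lifts_mul lM lM.
  have l1 : lifts_to (M *m M) (punit K).
    by apply: lifts_pm (lifts_one K) _.
  have ex : x = punit K by apply: H2; [exact: HGs | exact: lifts_inj lMM l1].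
  by rewrite ex in lM; case: (lifts_uniq (lifts_one K) lM) => ->; [left | right].
have [N [[NS NM NSN NN] Nmax]] := unique_section Sl S1 SM SN SV SU S2 c2.
have Nex : forall x, H x -> exists M, N M /\ lifts_to M x.
  move=> x Hx; have Sr : S (rep x) by exists x; split => //; exact: rep_lifts.
  case: (NSN _ Sr) => h; [exists (rep x) | exists (- rep x)]; split => //;
    [exact: rep_lifts | exact: lifts_neg (rep_lifts x)].
pose phi x := epsilon (inhabits (0 : 'M[K]_2)) (fun M => N M /\ lifts_to M x).
have phiP : forall x, H x -> N (phi x) /\ lifts_to (phi x) x.
  by move=> x Hx; exact: (epsilon_spec (inhabits (0 : 'M[K]_2)) (fun M => N M /\ lifts_to M x) (Nex x Hx)).
have Nuniq : forall M M' x, N M -> N M' -> lifts_to M x -> lifts_to M' x -> M' = M.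
  move=> M M' x NM1 NM2 l1 l2.
  by case: (lifts_uniq l1 l2) => // e; rewrite e in NM2; case: (NN _ NM1 NM2).
exists phi; split.
  split; first by move=> x Hx; case: (phiP x Hx).
  move=> x y Hx Hy.
  have [Nx lx'] := phiP x Hx; have [Ny ly] := phiP y Hy.
  have [Nxy lxy] := phiP _ (HM _ _ Hx Hy).
  exact: (Nuniq _ _ _ (NM _ _ Nx Ny) Nxy (lifts_mul lx' ly) lxy).
move=> psi [hpsi mpsi] x Hx.
pose N' M := exists y, H y /\ M = psi y.
have sN' : section S N'.
  split.
  - by move=> M [y [Hy ->]]; exists y; split => //; exact: hpsi.
  - move=> A B [y [Hy ->]] [z [Hz ->]]; exists (pmul y z); split; first exact: HM.
    by rewrite mpsi.
  - move=> M [y [Hy lM]].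
    case: (lifts_uniq (hpsi y Hy) lM) => e; [left | right]; exists y; split => //.
    by rewrite e opprK.
  - move=> M [y [Hy eM]] [z [Hz eM']].
    have ly := hpsi y Hy; have lz := hpsi z Hz.
    rewrite -eM in ly; rewrite -eM' in lz.
    have yz : y = z by apply: lifts_inj (lifts_neg ly) lz.
    have : M = - M by rewrite eM' -yz -eM.
    by move/(two_eq0 c2) => M0; move: (lifts_ne0 ly); rewrite M0 eqxx.
have Npsi : N (psi x) by apply: Nmax sN' _ _; exists x.
have [Nphi lphi] := phiP x Hx.
exact: (Nuniq _ _ _ Nphi Npsi lphi (hpsi x Hx)).
Qed.

End Val.

Theorem lemma3p1 (K : fieldType) (v : K -> int)
  (HK : is_nonarch_local_field v)
  (G : PSL2 K -> Prop) (HG : is_subgroup G) (Hdisc : is_discrete v G)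
  (H2 : no_2_torsion G) :
  (forall g : 'M[K]_2, g \in unitmx -> unique_lift (vertex_stab v G g)) /\
  (forall g h : 'M[K]_2, g \in unitmx -> h \in unitmx -> adjacent v g h ->
     unique_lift (edge_stab v G g h)).
Proof.
case: HK => [[Hmul Hadd [pi [pi0 vpi]]] [s0 [_ s0P]] _].
have HG' := HG; case: HG' => G1 GM GV.
split.
  move=> g ug.
  have [c hc] := acts_bd Hmul Hadd pi0 vpi ug ug.
  apply: (unique_lift_H Hmul Hadd pi0 vpi s0P HG Hdisc) => //.
  - by split => //; exact: acts_one.
  - by move=> x y [Gx ax] [Gy ay]; split; [exact: GM | exact: acts_mul ax ay].
  - by move=> x [Gx ax]; split; [exact: GV | exact: acts_inv ax].
  - by move=> x [].
  - by exists c => x [_ ax]; exact: hc.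
move=> g h ug uh _.
have [c1 hc1] := acts_bd Hmul Hadd pi0 vpi ug ug.
have [c2 hc2] := acts_bd Hmul Hadd pi0 vpi ug uh.
apply: (unique_lift_H Hmul Hadd pi0 vpi s0P HG Hdisc) => //.
- by split => //; left; split; exact: acts_one.
- move=> x y [Gx ax] [Gy ay]; split; first exact: GM.
  case: ax => [[xg xh]|[xg xh]]; case: ay => [[yg yh]|[yg yh]].
  + by left; split; [exact: acts_mul xg yg | exact: acts_mul xh yh].
  + by right; split; [exact: acts_mul xh yg | exact: acts_mul xg yh].
  + by right; split; [exact: acts_mul xg yg | exact: acts_mul xh yh].
  + by left; split; [exact: acts_mul xh yg | exact: acts_mul xg yh].
- move=> x [Gx ax]; split; first exact: GV.
  case: ax => [[xg xh]|[xg xh]].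
    by left; split; exact: acts_inv.
  by right; split; [exact: acts_inv xh | exact: acts_inv xg].
- by move=> x [].
- exists (if c1 <= c2 then c1 else c2) => x [_ ax].
  case: ax => [[xg _]|[xg _]].
    have [A [lA mA]] := hc1 x xg; exists A; split => //.
    by apply: mge_le mA; case: ifPn; lia.
  have [A [lA mA]] := hc2 x xg; exists A; split => //.
  by apply: mge_le mA; case: ifPn; lia.
Qed.
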